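(* Let $m,n$ be positive integers and let $U,V,U_0,\dots,U_{n-1},V_0,\dots,V_{n-1}$ be elements of the free lattice $\mathrm{F}_{\mathbf{L}}(m)$ (viewed as lattice terms in $m$ variables). Let $\mathbf{x}_0,\dots,\mathbf{x}_{m-1},\mathbf{y}_0,\dots,\mathbf{y}_{m-1}$ be the canonical free generators of $\mathrm{F}_{\mathbf{L}}(2m)$, and write $\vec{\mathbf{x}}=(\mathbf{x}_i)_{i<m}$, $\vec{\mathbf{y}}=(\mathbf{y}_i)_{i<m}$. Let $R\in\mathrm{F}_{\mathbf{L}}(n)$. If the inequality \[ U(\vec{\mathbf{x}})\wedge V(\vec{\mathbf{y}})\leq R\bigl(U_j(\vec{\mathbf{x}})\wedge V_j(\vec{\mathbf{y}})\mid j<n\bigr) \] holds in $\mathrm{F}_{\mathbf{L}}(2m)$, then there exists a pure meet polynomial $R^*\leq R$ (in $\mathrm{F}_{\mathbf{L}}(n)$) such that \[ U(\vec{\mathbf{x}})\wedge V(\vec{\mathbf{y}})\leq R^*\bigl(U_j(\vec{\mathbf{x}})\wedge V_j(\vec{\mathbf{y}})\mid j<n\bigr). \]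
   Context: $\mathrm{F}_{\mathbf{L}}(k)$ denotes the free lattice on $k$ generators. A pure meet polynomial in $\mathrm{F}_{\mathbf{L}}(n)$ is an element of the form $\bigwedge_{i\in I}\mathbf{z}_i$, where $\mathbf{z}_0,\dots,\mathbf{z}_{n-1}$ are the free generators of $\mathrm{F}_{\mathbf{L}}(n)$ and $I$ is a nonempty subset of $\{0,1,\dots,n-1\}$. *)

(* Defs.v *)
(* Free lattice F_L(k) modelled as lattice terms in k
   variables, with the order of F_L(k): s <= t iff the inequality holds
   in every lattice under every assignment of the variables. *)
From HB Require Import structures.
From mathcomp Require Import all_boot all_order.
Set Implicit Arguments. Unset Strict Implicit. Unset Printing Implicit Defensive.
Import Order.TTheory.
Local Open Scope order_scope.

Inductive lterm (k : nat) : Type :=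
| LVar of 'I_k
| LMeet of lterm k & lterm k
| LJoin of lterm k & lterm k.

Arguments LVar {k}.
Arguments LMeet {k}.
Arguments LJoin {k}.

Fixpoint leval {k : nat} {d : Order.disp_t} {L : latticeType d}
  (a : 'I_k -> L) (t : lterm k) : L :=
  match t with
  | LVar i => a i
  | LMeet s u => leval a s `&` leval a u
  | LJoin s u => leval a s `|` leval a u
  end.

Definition fl_le {k : nat} (s t : lterm k) : Prop :=
  forall (d : Order.disp_t) (L : latticeType d) (a : 'I_k -> L),
    leval a s <= leval a t.

Definition fl_eq {k : nat} (s t : lterm k) : Prop := fl_le s t /\ fl_le t s.

Fixpoint lsubst {n k : nat} (sigma : 'I_n -> lterm k) (t : lterm n) : lterm k :=
  match t with
  | LVar i => sigma i
  | LMeet s u => LMeet (lsubst sigma s) (lsubst sigma u)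
  | LJoin s u => LJoin (lsubst sigma s) (lsubst sigma u)
  end.

Definition xgen {m : nat} (i : 'I_m) : lterm (m + m) := LVar (lshift m i).
Definition ygen {m : nat} (i : 'I_m) : lterm (m + m) := LVar (rshift m i).

Fixpoint meet_list {n : nat} (i0 : 'I_n) (s : seq 'I_n) : lterm n :=
  match s with
  | [::] => LVar i0
  | j :: s' => LMeet (LVar i0) (meet_list j s')
  end.

Definition pure_meet {n : nat} (t : lterm n) : Prop :=
  exists (i0 : 'I_n) (s : seq 'I_n), fl_eq t (meet_list i0 s).

(* Main.v *)
Require Import Defs.
From HB Require Import structures.
From mathcomp Require Import all_boot all_order.
From Stdlib Require Import Classical ClassicalDescription.
Set Implicit Arguments. Unset Strict Implicit. Unset Printing Implicit Defensive.
Import Order.TTheory.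
Local Open Scope order_scope.

Definition inI d (P : latticeType d) (al be u : P) := (al <= u) && (u <= be).
Definition dbl d (P : latticeType d) (al be : P) :=
  {x : P * bool | x.2 ==> inI al be x.1}.
HB.instance Definition _ d (P : latticeType d) (al be : P) := Choice.on (dbl al be).

Definition dle d (P : latticeType d) (al be : P) (x y : dbl al be) :=
  ((val x).1 <= (val y).1) && ~~ [&& (val x).2, ~~ (val y).2 & inI al be (val y).1].

Lemma dle_refl d (P : latticeType d) (al be : P) : reflexive (@dle d P al be).
Proof. by move=> [[u e] He]; rewrite /dle /= lexx; case: e He. Qed.

Lemma dle_anti d (P : latticeType d) (al be : P) : antisymmetric (@dle d P al be).
Proof.
move=> [[u e] He] [[v f] Hf]; rewrite /dle /= => /andP[/andP[uv H1] /andP[vu H2]].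
have euv : u = v by apply: le_anti; rewrite uv vu.
subst v; apply/val_inj => /=; congr pair.
move: H1 H2 He Hf; case: e; case: f => //=.
all: by case: (inI al be u).
Qed.

Lemma dle_trans d (P : latticeType d) (al be : P) : transitive (@dle d P al be).
Proof.
move=> [[v f] Hf] [[u e] He] [[w g] Hg]; rewrite /dle /= /inI.
move=> /andP[uv H1] /andP[vw H2]; rewrite (le_trans uv vw) /=.
apply/negP => /and3P[ee gg /andP[aw wb]].
move: He => /=; rewrite ee /inI /= => /andP[au ub].
have av := le_trans au uv; have vb := le_trans vw wb.
move: H1 H2; rewrite ee /inI av vb aw wb (negbTE gg) /=; case: (f) => //.
Qed.

HB.instance Definition _ d (P : latticeType d) (al be : P) :=
  Order.Le_isPOrder.Build (Order.Disp tt tt) (dbl al be)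
    (@dle_refl d P al be) (@dle_anti d P al be) (@dle_trans d P al be).

Lemma impl_andl (b c : bool) : (b && c) ==> b. Proof. by case: b; case: c. Qed.

Definition dmeet d (P : latticeType d) (al be : P) (x y : dbl al be) : dbl al be :=
  exist _ ((val x).1 `&` (val y).1,
    inI al be ((val x).1 `&` (val y).1) &&
      ((inI al be (val x).1 ==> (val x).2) && (inI al be (val y).1 ==> (val y).2)))
    (impl_andl _ _).

Definition djoin d (P : latticeType d) (al be : P) (x y : dbl al be) : dbl al be :=
  exist _ ((val x).1 `|` (val y).1,
    inI al be ((val x).1 `|` (val y).1) && ((val x).2 || (val y).2))
    (impl_andl _ _).

Lemma dmeetP d (P : latticeType d) (al be : P) (x y z : dbl al be) :
  (x <= dmeet y z) = (x <= y) && (x <= z).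
Proof.
case: x => [[a g] Hg]; case: y => [[u e] He]; case: z => [[v f] Hf].
rewrite /dmeet /Order.le /= /dle /= lexI.
case: g Hg => /=; last by rewrite !andbT.
move=> /andP[aa ab].
case: (boolP (a <= u)) => au //=; case: (boolP (a <= v)) => av //=; rewrite ?andbF //.
have auv : a <= u `&` v by rewrite lexI au av.
have alu := le_trans aa au; have alv := le_trans aa av; have aluv := le_trans aa auv.
rewrite /inI alu alv aluv /=.
case: (boolP (u `&` v <= be)) => uvb /=.
  by case: (u <= be); case: (v <= be); case: e {He}; case: f {Hf}.
case: (boolP (u <= be)) => ub.
  by case/negP: uvb; apply: le_trans ub; apply: leIl.
case: (boolP (v <= be)) => vb; last by case: e {He}; case: f {Hf}.
by case/negP: uvb; apply: le_trans vb; apply: leIr.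
Qed.

Lemma djoinP d (P : latticeType d) (al be : P) (x y z : dbl al be) :
  (djoin x y <= z) = (x <= z) && (y <= z).
Proof.
case: x => [[u e] He]; case: y => [[v f] Hf]; case: z => [[c g] Hg].
rewrite /djoin /Order.le /= /dle /= leUx.
case: (boolP (u <= c)) => uc //=; case: (boolP (v <= c)) => vc //=; rewrite ?andbF //.
case: g Hg => /=; first by rewrite !andbF.
move=> _; case: (boolP (inI al be c)) => cI; last by rewrite !andbF.
rewrite !andbT; move: cI => /andP[ac cb].
case: e He => /= He; case: f Hf => /= Hf; rewrite ?andbF ?andbT //.
- rewrite /inI (le_trans (andP He).1 (leUl _ _)) /=.
  by rewrite (@le_trans _ _ c) // leUx uc vc.
- rewrite /inI (le_trans (andP He).1 (leUl _ _)) /=.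
  by rewrite (@le_trans _ _ c) // leUx uc vc.
- rewrite /inI (le_trans (andP Hf).1 (leUr _ _)) /=.
  by rewrite (@le_trans _ _ c) // leUx uc vc.
Qed.

HB.instance Definition _ d (P : latticeType d) (al be : P) :=
  Order.POrder_MeetJoin_isLattice.Build (Order.Disp tt tt) (dbl al be)
    (@dmeetP d P al be) (@djoinP d P al be).

Definition dlift d (P : latticeType d) (al be : P) (u : P) : dbl al be :=
  exist _ (u, false) isT.

Lemma dproj k d (P : latticeType d) (al be : P) (a : 'I_k -> P) (t : lterm k) :
  (val (leval (fun i => dlift al be (a i)) t)).1 = leval a t.
Proof. by elim: t => //= s IHs u IHu; rewrite -IHs -IHu. Qed.

Lemma dbit d (P : latticeType d) (al be : P) (x : dbl al be) :
  (val x).2 -> inI al be (val x).1.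
Proof. by case: x => [[u e] /= /implyP]. Qed.

Lemma leval_subst n k d (L : latticeType d) (a : 'I_k -> L) (sigma : 'I_n -> lterm k) t :
  leval a (lsubst sigma t) = leval (fun i => leval a (sigma i)) t.
Proof. by elim: t => //= s -> u ->. Qed.

Lemma leval_const k d (L : latticeType d) (a : 'I_k -> L) c t :
  (forall i, a i = c) -> leval a t = c.
Proof. by move=> H; elim: t => /= [i|s -> u ->|s -> u ->]; rewrite ?meetxx ?joinxx. Qed.

Fixpoint allfail k d (L : latticeType d) (a : 'I_k -> L) (l : seq (lterm k * lterm k)) : Prop :=
  match l with
  | [::] => True
  | p :: l' => ~ (leval a p.1 <= leval a p.2) /\ allfail a l'
  end.

Definition fails k (l : seq (lterm k * lterm k)) : Prop :=
  exists d (L : latticeType d) (a : 'I_k -> L), allfail a l.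

Lemma leval_prod k d1 d2 (L1 : latticeType d1) (L2 : latticeType d2)
  (a1 : 'I_k -> L1) (a2 : 'I_k -> L2) t :
  leval (fun i => ((a1 i, a2 i) : L1 *p L2)) t = (leval a1 t, leval a2 t).
Proof. by elim: t => //= s -> u ->. Qed.

Lemma fails_cat k (l1 l2 : seq (lterm k * lterm k)) :
  fails l1 -> fails l2 -> fails (l1 ++ l2).
Proof.
move=> [d1 [L1 [a1 H1]]] [d2 [L2 [a2 H2]]].
exists _, (L1 *p L2)%type, (fun i => ((a1 i, a2 i) : L1 *p L2)).
elim: l1 H1 => [_|p l1 IH [Hp Hl]] /=.
  elim: l2 H2 => //= p l2 IH [Hp Hl]; split; last exact: IH.
  by rewrite !leval_prod leEprod /= => /andP[_].
split; last exact: IH.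
by rewrite !leval_prod leEprod /= => /andP[].
Qed.


Lemma nfl_fails k (s t : lterm k) : ~ fl_le s t -> fails [:: (s, t)].
Proof.
move=> H; apply: NNPP => H'; apply: H => d L a; apply: NNPP => H2.
by apply: H'; exists d, L, a.
Qed.

Lemma dleE d (P : latticeType d) (al be : P) (x y : dbl al be) : (x <= y) = dle x y.
Proof. by []. Qed.

Lemma whitman k (a1 a2 b1 b2 : lterm k) :
  fl_le (LMeet a1 a2) (LJoin b1 b2) ->
  fl_le a1 (LJoin b1 b2) \/ fl_le a2 (LJoin b1 b2) \/
  fl_le (LMeet a1 a2) b1 \/ fl_le (LMeet a1 a2) b2.
Proof.
move=> H.
case: (classic (fl_le a1 (LJoin b1 b2))) => [?|n1]; first by left.
case: (classic (fl_le a2 (LJoin b1 b2))) => [?|n2]; first by right; left.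
case: (classic (fl_le (LMeet a1 a2) b1)) => [?|n3]; first by right; right; left.
case: (classic (fl_le (LMeet a1 a2) b2)) => [?|n4]; first by right; right; right.
exfalso.
have := fails_cat (fails_cat (nfl_fails n1) (nfl_fails n2))
                  (fails_cat (nfl_fails n3) (nfl_fails n4)).
move=> [d [P [a /= [h1 [h2 [h3 [h4 _]]]]]]].
set al := leval a a1 `&` leval a a2.
set be := leval a b1 `|` leval a b2.
have hab : al <= be by exact: (H d P a).
have := H _ (dbl al be) (fun i => dlift al be (a i)).
rewrite /= dleE /dle.
set x1 := leval _ a1; set x2 := leval _ a2; set y1 := leval _ b1; set y2 := leval _ b2.
have ex1 : (val x1).1 = leval a a1 by rewrite /x1 dproj.
have ex2 : (val x2).1 = leval a a2 by rewrite /x2 dproj.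
have ey1 : (val y1).1 = leval a b1 by rewrite /y1 dproj.
have ey2 : (val y2).1 = leval a b2 by rewrite /y2 dproj.
have nI1 : inI al be (val x1).1 = false.
  by apply/negbTE/negP; rewrite ex1 => /andP[_].
have nI2 : inI al be (val x2).1 = false.
  by apply/negbTE/negP; rewrite ex2 => /andP[_].
have nb1 : (val y1).2 = false.
  by apply/negbTE/negP => /dbit; rewrite ey1 => /andP[].
have nb2 : (val y2).2 = false.
  by apply/negbTE/negP => /dbit; rewrite ey2 => /andP[].
have -> : x1 `&` x2 = dmeet x1 x2 by [].
have -> : y1 `|` y2 = djoin y1 y2 by [].
rewrite /= nI1 nI2 nb1 nb2 ex1 ex2 ey1 ey2 -/al -/be /inI lexx hab le_refl /=.
by [].
Qed.

Fixpoint holds n (J : 'I_n -> Prop) (t : lterm n) : Prop :=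
  match t with
  | LVar i => J i
  | LMeet s u => holds J s /\ holds J u
  | LJoin s u => holds J s \/ holds J u
  end.

Lemma holds_ex n (J : 'I_n -> Prop) t : holds J t -> exists j, J j.
Proof.
elim: t => /= [i|s IHs u IHu|s IHs u IHu]; first by exists i.
  by case=> /IHs.
by case=> [/IHs|/IHu].
Qed.

Lemma ml_le n d (L : latticeType d) (a : 'I_n -> L) i0 s j :
  (j = i0) \/ (j \in s) -> leval a (meet_list i0 s) <= a j.
Proof.
elim: s i0 => [|k s IH] i0 /=.
  by case=> [->|//]; rewrite lexx.
case=> [->|]; first exact: leIl.
rewrite in_cons => /orP[/eqP jk|js]; first subst j.
  by apply: le_trans (leIr _ _) _; apply: IH; left.
by apply: le_trans (leIr _ _) _; apply: IH; right.
Qed.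

Lemma ml_ge n d (L : latticeType d) (a : 'I_n -> L) i0 s x :
  x <= a i0 -> (forall j, j \in s -> x <= a j) -> x <= leval a (meet_list i0 s).
Proof.
elim: s i0 => [|k s IH] i0 //= h0 hs.
rewrite lexI h0 /=; apply: IH; first by apply: hs; rewrite mem_head.
by move=> j js; apply: hs; rewrite in_cons js orbT.
Qed.

Definition cx (m : nat) (i : 'I_(m + m)) : bool := (i < m)%N.

Lemma cx_x m (X : lterm m) : leval (@cx m) (lsubst xgen X) = true.
Proof. by rewrite leval_subst; apply: leval_const => i /=; rewrite /cx /= ltn_ord. Qed.

Lemma cx_y m (X : lterm m) : leval (@cx m) (lsubst ygen X) = false.
Proof. by rewrite leval_subst; apply: leval_const => i /=; rewrite /cx /= ltnNge leq_addr. Qed.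

Definition cy (m : nat) (i : 'I_(m + m)) : bool := ~~ (i < m)%N.

Lemma cy_x m (X : lterm m) : leval (@cy m) (lsubst xgen X) = false.
Proof. by rewrite leval_subst; apply: leval_const => i /=; rewrite /cy /= ltn_ord. Qed.

Lemma cy_y m (X : lterm m) : leval (@cy m) (lsubst ygen X) = true.
Proof. by rewrite leval_subst; apply: leval_const => i /=; rewrite /cy /= ltnNge leq_addr. Qed.

Theorem lemma3p2 (m n : nat) (Hm : 0 < m) (Hn : 0 < n)
  (U V : lterm m) (Us Vs : 'I_n -> lterm m) (R : lterm n) :
  fl_le (LMeet (lsubst xgen U) (lsubst ygen V))
        (lsubst (fun j => LMeet (lsubst xgen (Us j)) (lsubst ygen (Vs j))) R) ->
  exists Rs : lterm n,
    pure_meet Rs /\ fl_le Rs R /\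
    fl_le (LMeet (lsubst xgen U) (lsubst ygen V))
          (lsubst (fun j => LMeet (lsubst xgen (Us j)) (lsubst ygen (Vs j))) Rs).
Proof.
set w := LMeet _ _; set sig := fun j => _.
move=> HR.
pose J j := fl_le w (sig j).
have claimA : forall p, fl_le w (lsubst sig p) -> holds J p.
  elim=> /= [i|s IHs u IHu|s IHs u IHu] H //.
    split; [apply: IHs|apply: IHu] => d L a; have := H d L a; rewrite /= lexI => /andP[] //.
  case: (whitman H) => [H1|[H2|[H3|H4]]].
  - exfalso; have := H1 _ _ (@cx m); rewrite /= cx_x !leval_subst.
    have Hc : forall i, leval (@cx m) (sig i) = false.
      by move=> i; rewrite /sig /= cx_x cx_y.
    by rewrite (leval_const s Hc) (leval_const u Hc).
  - exfalso; have := H2 _ _ (@cy m); rewrite /= cy_y !leval_subst.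
    have Hc : forall i, leval (@cy m) (sig i) = false.
      by move=> i; rewrite /sig /= cy_x cy_y.
    by rewrite (leval_const s Hc) (leval_const u Hc).
  - by left; apply: IHs.
  - by right; apply: IHu.
have HJ := claimA R HR.
have [i0 Ji0] := holds_ex HJ.
pose Jb j := if excluded_middle_informative (J j) then true else false.
have JbP j : Jb j -> J j by rewrite /Jb; case: excluded_middle_informative.
have JbP' j : J j -> Jb j by rewrite /Jb; case: excluded_middle_informative.
pose s := [seq j <- enum 'I_n | Jb j].
exists (meet_list i0 s); split; first by exists i0, s; split => d L a; rewrite lexx.
split.
  move=> d L a; elim: R HJ {HR} => /= [i|p IHp q IHq|p IHp q IHq].
  - move=> Ji; apply: ml_le; right; rewrite mem_filter mem_enum andbT; exact: JbP'.
  - by case=> /IHp h1 /IHq h2; rewrite lexI h1 h2.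
  - by case=> [/IHp h|/IHq h]; [apply: le_trans h (leUl _ _)|apply: le_trans h (leUr _ _)].
move=> d L a; rewrite leval_subst; apply: ml_ge; first exact: Ji0.
by move=> j; rewrite mem_filter => /andP[/JbP Jj _]; apply: Jj.
Qed.
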